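(* Let $E$ be any execution of Algorithm C (described in the context). The sequence of values taken by the max-register $\mathit{logNumIncrems}$ in $E$ has the following properties: (i) it begins at $-1$; (ii) it is increasing; (iii) for every integer $i>cln$, if $i$ appears in the sequence then so does $i-1$.
   Context: Shared objects are treated as atomic. An exact counter supports Increment and Read; a Read returns the number of preceding Increments. A max-register supports MaxWrite$(v)$ and MaxRead; a MaxRead returns the largest value among all preceding MaxWrites, or the initial value if there was none. Algorithm C has the following parameters: - $k\ge2$ an integer, $n$ the number of processes, $m$ a positive integer; - $cln=\lceil\log_k n\rceil$ and $N=k^{cln}$. Shared objects: - an array $\mathit{Bucket}[0..\max\{1,\lceil\log_k\lceil m/n\rceil\rceil+1\}-1]$ of exact counters, each initially $0$; - a max-register $\mathit{logNumIncrems}$ with initial value $-1$. Each process has local variables $\mathit{lcounter}=0$, $\mathit{index}=0$ and $\mathit{threshold}=1$. Increment(): - $\mathit{lcounter}\gets\mathit{lcounter}+1$. - If $\mathit{lcounter}=\mathit{threshold}$, then: - $\mathit{Bucket}[\mathit{index}]$.Increment(); - $\mathit{lcounter}\gets0$; - $val\gets\mathit{Bucket}[\mathit{index}]$.Read(); - if $\mathit{index}=0$ and $val<N$, then $\mathit{logNumIncrems}$.MaxWrite$(\lfloor\log_k val\rfloor)$; - if $val\ge N$, then: - $\mathit{logNumIncrems}$.MaxWrite$(cln+\mathit{index})$; - $\mathit{index}\gets\mathit{index}+1$; - if $\mathit{index}>1$, then $\mathit{threshold}\gets k\cdot\mathit{threshold}$; - if $\mathit{index}=1$, then $\mathit{threshold}\gets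 k-1$. Read(): - $r\gets\mathit{logNumIncrems}$.MaxRead(). - If $r\ge0$, return $k^{r+1}$; otherwise return $0$. *)

(* Defs.v *)
From mathcomp Require Import all_boot all_order all_algebra.
Set Implicit Arguments. Unset Strict Implicit. Unset Printing Implicit Defensive.
Import Order.TTheory GRing.Theory Num.Theory.

Definition cln (k n : nat) : nat := up_log k n.
Definition NN (k n : nat) : nat := k ^ cln k n.
Definition nbuckets (k n m : nat) : nat :=
  maxn 1 ((up_log k ((m + n.-1) %/ n)).+1).

Inductive pc : Type :=
| Idle
| AfterInc             (* Bucket[index].Increment done, about to Read it *)
| WriteLog of nat      (* about to MaxWrite(floor(log_k val)) *)
| WriteBig.            (* about to MaxWrite(cln+index), then update index/threshold *)

Record pstate := PS { lcounter : nat; index : nat; threshold : nat; pcv : pc }.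

Definition pinit : pstate := PS 0 0 1 Idle.

Record config (n : nat) := Cfg {
  bucket : nat -> nat;
  logNumIncrems : int;
  procs : 'I_n -> pstate }.

Definition cinit (n : nat) : config n :=
  Cfg (fun _ => 0%N) (-1)%R (fun _ => pinit).

Definition upd (n : nat) (f : 'I_n -> pstate) (i : 'I_n) (s : pstate) :=
  fun j => if j == i then s else f j.

Definition bincr (b : nat -> nat) (x : nat) := fun y => if y == x then (b y).+1 else b y.

Definition new_threshold (k idx thr : nat) : nat :=
  if (1 < idx)%N then k * thr else if idx == 1%N then k.-1 else thr.

(* One atomic step of process i (each step performs at most one access to a
   shared object; local computation is folded into the adjacent shared step).
   An access to Bucket outside its index range is undefined: no step. *)
Inductive step (k n m : nat) (C C' : config n) : Prop :=
| StRead (i : 'I_n) :                      (* Read(): one MaxRead, no state change *)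
    pcv (procs C i) = Idle -> C' = C -> @step k n m C C'
| StIncLocal (i : 'I_n) :
    let p := procs C i in
    pcv p = Idle -> (lcounter p).+1 != threshold p ->
    C' = Cfg (bucket C) (logNumIncrems C)
             (upd (procs C) i (PS (lcounter p).+1 (index p) (threshold p) Idle)) ->
    @step k n m C C'
| StIncBucket (i : 'I_n) :
    let p := procs C i in
    pcv p = Idle -> (lcounter p).+1 = threshold p -> (index p < nbuckets k n m)%N ->
    C' = Cfg (bincr (bucket C) (index p)) (logNumIncrems C)
             (upd (procs C) i (PS 0 (index p) (threshold p) AfterInc)) ->
    @step k n m C C'
| StReadBucket (i : 'I_n) :
    let p := procs C i in
    pcv p = AfterInc -> (index p < nbuckets k n m)%N ->
    let val := bucket C (index p) in
    let nxt := if (index p == 0%N) && (val < NN k n)%N then WriteLog val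
               else if (NN k n <= val)%N then WriteBig else Idle in
    C' = Cfg (bucket C) (logNumIncrems C)
             (upd (procs C) i (PS (lcounter p) (index p) (threshold p) nxt)) ->
    @step k n m C C'
| StWriteLog (i : 'I_n) (v : nat) :
    let p := procs C i in
    pcv p = WriteLog v ->
    C' = Cfg (bucket C) (Num.max (logNumIncrems C) (Posz (trunc_log k v)))
             (upd (procs C) i (PS (lcounter p) (index p) (threshold p) Idle)) ->
    @step k n m C C'
| StWriteBig (i : 'I_n) :
    let p := procs C i in
    pcv p = WriteBig ->
    C' = Cfg (bucket C) (Num.max (logNumIncrems C) (Posz (cln k n + index p)))
             (upd (procs C) i (PS (lcounter p) (index p).+1
                      (new_threshold k (index p).+1 (threshold p)) Idle)) ->
    @step k n m C C'.
Arguments step : clear implicits.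

(* An execution: an infinite sequence of configurations starting in the initial
   one, each obtained from the previous by a step or by stuttering (so finite
   executions are included, being extended by stuttering). *)
Definition execution (k n m : nat) (E : nat -> config n) : Prop :=
  E 0%N = cinit n /\ forall t, E t.+1 = E t \/ step k n m (E t) (E t.+1).
Arguments execution : clear implicits.

(* Main.v *)
Require Import Defs.
From mathcomp Require Import all_boot all_order all_algebra.
From mathcomp Require Import zify.
Import Order.TTheory GRing.Theory Num.Theory.
Local Open Scope ring_scope.
Set Implicit Arguments.

Definition Inv (k n : nat) (C : config n) : Prop :=
  (forall j : 'I_n, (1 <= Defs.index (procs C j))%N ->
      Posz (cln k n + Defs.index (procs C j)) <= logNumIncrems C + 1)
  /\ (forall (j : 'I_n) v, pcv (procs C j) = WriteLog v -> (v < NN k n)%N).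

Lemma maxcase (a b : int) : Num.max a b = if a <= b then b else a.
Proof. by rewrite maxEle. Qed.

Lemma step_mono k n m (C C' : config n) : step k n m C C' -> logNumIncrems C <= logNumIncrems C'.
Proof.
case=> [i _ ->| i p _ _ ->| i p _ _ _ ->| i p _ _ val nxt ->| i v p _ ->| i p _ ->] //=;
  by rewrite le_max lexx.
Qed.

Lemma upd_eq n (f : 'I_n -> pstate) i s j :
  upd f i s j = if j == i then s else f j.
Proof. by []. Qed.

Lemma inv_step k n m (C C' : config n) : (1 < k)%N -> Inv k C -> step k n m C C' -> Inv k C'.
Proof.
move=> hk [I1 I2] st.
have mono := step_mono st.
case: st => [i _ ->| i p Hp _ ->| i p Hp _ _ ->| i p Hp _ val nxt ->| i v p Hp ->| i p Hp ->] //=.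
- rewrite /Inv /=; split=> j; rewrite upd_eq; case: eqP => [_|_] /=.
  + by move=> h; apply: (I1 i).
  + by move=> h; apply: I1.
  + by [].
  + exact: I2.
- rewrite /Inv /=; split=> j; rewrite upd_eq; case: eqP => [_|_] /=.
  + by move=> h; apply: (I1 i).
  + by move=> h; apply: I1.
  + by [].
  + exact: I2.
- rewrite /Inv /=; split=> j; rewrite upd_eq; case: eqP => [_|_] /=.
  + by move=> h; apply: (I1 i).
  + by move=> h; apply: I1.
  + rewrite /nxt /val; case: ifP => [/andP[_ h] v [<-] //|_].
    by case: ifP.
  + exact: I2.
- rewrite /Inv /=; split=> j; rewrite upd_eq; case: eqP => [_|_] /=.
  + move=> h; apply: le_trans (I1 i h) _; rewrite lerD2r le_max lexx //.
  + move=> h; apply: le_trans (I1 j h) _; rewrite lerD2r le_max lexx //.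
  + by [].
  + exact: I2.
- rewrite /Inv /=; split=> j; rewrite upd_eq; case: eqP => [_|_] /=.
  + move=> _; rewrite maxcase; case: ifP => h; last by lia.
    rewrite -addSnnS. lia.
  + move=> h; apply: le_trans (I1 j h) _; rewrite lerD2r le_max lexx //.
  + by [].
  + exact: I2.
Qed.

Lemma key k n m (C C' : config n) : (1 < k)%N -> Inv k C -> step k n m C C' ->
  logNumIncrems C' != logNumIncrems C -> Posz (cln k n) < logNumIncrems C' ->
  logNumIncrems C = logNumIncrems C' - 1.
Proof.
move=> hk [I1 I2] st.
case: st => [i _ ->| i p Hp _ ->| i p Hp _ _ ->| i p Hp _ val nxt ->| i v p Hp ->| i p Hp ->] /=;
  try by rewrite eqxx.
- have hv := I2 i v Hp.
  have : (trunc_log k v <= cln k n)%N.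
    rewrite -(trunc_expnK (cln k n) hk); apply: leq_trunc_log.
    by apply: ltnW.
  rewrite maxcase; case: ifP => _; last by rewrite eqxx.
  move=> h _ h2. lia.
- rewrite maxcase; case: ifP => h; last by rewrite eqxx.
  move=> hne hlt.
  have [h0|h1] := posnP (Defs.index p).
  + move: hlt; rewrite h0 addn0; lia.
  + have := I1 i h1; rewrite -/p => h3.
    move: hne; rewrite -/p => hne. lia.
Qed.

Theorem lemma15 (k n m : nat) (hk : (2 <= k)%N) (hn : (0 < n)%N) (hm : (0 < m)%N)
    (E : nat -> config n) (hE : execution k n m E) :
  logNumIncrems (E 0%N) = -1
  /\ (forall t1 t2 : nat, (t1 <= t2)%N -> logNumIncrems (E t1) <= logNumIncrems (E t2))
  /\ (forall i : int, (Posz (cln k n) < i) ->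
        (exists t, logNumIncrems (E t) = i) ->
        exists t, logNumIncrems (E t) = i - 1).
Proof.
case: hE => E0 hS.
have mono1 t : logNumIncrems (E t) <= logNumIncrems (E t.+1).
  by case: (hS t) => [->|/step_mono].
have inv t : Inv k (E t).
  elim: t => [|t IH]; first by rewrite E0; split=> j //=.
  by case: (hS t) => [->|/(inv_step hk IH)].
split; first by rewrite E0.
split.
  move=> t1 t2 /subnK <-; elim: (t2 - t1)%N => [|d IH] //.
  by rewrite addSn; apply: le_trans IH (mono1 _).
move=> i hi [t ht]; elim: t ht => [|t IH] ht.
  by move: ht hi; rewrite E0 => <-.
case: (hS t) => [e|st]; first by apply: IH; rewrite -e.
have [e|ne] := eqVneq (logNumIncrems (E t.+1)) (logNumIncrems (E t)).
  by apply: IH; rewrite -e.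
exists t; rewrite -ht; apply: (key hk (inv t) st ne); by rewrite ht.
Qed.
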